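(* Let $f_1,\dots,f_n$ be arbitrary linear functions. There exists $r>0$ such that for every real $\epsilon$ with $|\epsilon|<r$ and all permutations $\sigma,\rho$ of $[n]$: if $(f^{(\epsilon)})^\sigma\le(f^{(\epsilon)})^\rho$ then $f^\sigma\le f^\rho$.
   Context: A linear function is $f(x)=ax+b$ with $\alpha(f)=a$. For a real $\epsilon$, $f^{(\epsilon)}=f$ if $\alpha(f)\ne0$ and $f^{(\epsilon)}(x)=f(x)+\epsilon x$ if $\alpha(f)=0$. For a permutation $\sigma$, $f^\sigma=f_{\sigma(n)}\circ\cdots\circ f_{\sigma(1)}$ and $(f^{(\epsilon)})^\sigma=f^{(\epsilon)}_{\sigma(n)}\circ\cdots\circ f^{(\epsilon)}_{\sigma(1)}$. Inequalities between functions are pointwise. *)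

(* Defs.v *)
From mathcomp Require Import all_boot all_order all_algebra all_fingroup.
From mathcomp Require Import reals.
Set Implicit Arguments. Unset Strict Implicit. Unset Printing Implicit Defensive.
Import Order.TTheory GRing.Theory Num.Theory.
Local Open Scope ring_scope.

(* A linear function f(x) = a x + b is represented by its pair (a, b). *)
Definition linfn (R : realType) := (R * R)%type.

Definition lf_apply (R : realType) (f : linfn R) (x : R) : R := f.1 * x + f.2.

Definition lf_alpha (R : realType) (f : linfn R) : R := f.1.

Definition lf_pert (R : realType) (eps : R) (f : linfn R) : linfn R :=
  if lf_alpha f == 0 then (f.1 + eps, f.2) else f.

(* f^sigma = f_{sigma(n)} o ... o f_{sigma(1)} as a function R -> R:
   f_{sigma(1)} is applied first. *)
Definition lf_comp_perm (R : realType) (n : nat) (f : 'I_n -> linfn R)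
  (s : 'S_n) (x : R) : R :=
  foldl (fun y i => lf_apply (f (s i)) y) x (enum 'I_n).

(* Main.v *)
Require Import Defs.
From mathcomp Require Import all_boot all_order all_algebra all_fingroup.
From mathcomp Require Import reals.
From mathcomp Require Import all_classical all_reals all_analysis.
From mathcomp Require Import ring lra.
Import Order.TTheory GRing.Theory Num.Theory numFieldNormedType.Exports.
Local Open Scope ring_scope.

Section Aux.
Variable R : realType.

Definition cont0 (g : R -> R) := (g e @[e --> (0:R)] --> g 0)%classic.

Lemma step_cont (h : linfn R) (y : R -> R) : cont0 y ->
  cont0 (fun e => lf_apply (lf_pert e h) (y e)).
Proof.
move=> cy; rewrite /cont0 /lf_apply /lf_pert /lf_alpha.
case: (h.1 == 0) => /=.
  have H : ((fun e => (h.1 + e) * y e + h.2) e @[e --> (0:R)] -->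
             (h.1 + 0) * y 0 + h.2)%classic.
    apply: cvgD; last exact: cvg_cst.
    apply: cvgM => //; apply: cvgD; [exact: cvg_cst | exact: cvg_id].
  exact: H.
have H : ((fun e => h.1 * y e + h.2) e @[e --> (0:R)] -->
             h.1 * y 0 + h.2)%classic.
  apply: cvgD; last exact: cvg_cst.
  apply: cvgM => //; exact: cvg_cst.
exact: H.
Qed.

End Aux.

Lemma fold_cont' (R : realType) (T : Type) (F : T -> linfn R) (l : seq T) :
  forall y : R -> R, @cont0 R y ->
  @cont0 R (fun e => foldl (fun z i => lf_apply (lf_pert e (F i)) z) (y e) l).
Proof.
elim: l => [|a l IH] y cy //=.
have := IH _ (@step_cont R (F a) y cy). exact.
Qed.

Lemma fold_aff (R : realType) (T : Type) (F : T -> linfn R) (l : seq T) :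
  forall x, foldl (fun z i => lf_apply (F i) z) x l =
    (\prod_(i <- l) (F i).1) * x + foldl (fun z i => lf_apply (F i) z) 0 l.
Proof.
elim: l => [|a l IH] x /=; first by rewrite big_nil mul1r addr0.
rewrite IH [in RHS]IH big_cons /lf_apply.
rewrite mulr0 add0r; ring.
Qed.

Lemma comp_aff (R : realType) (n : nat) (g : 'I_n -> linfn R) (s : 'S_n) x :
  lf_comp_perm g s x = (\prod_i (g i).1) * x + lf_comp_perm g s 0.
Proof.
rewrite /lf_comp_perm (@fold_aff R _ (fun i => g (s i))); congr (_ * _ + _).
rewrite big_enum /=.
by rewrite [RHS](reindex_inj (@perm_inj _ s)).
Qed.

Lemma fin_min (R : realType) (T : finType) (Q : T -> R -> Prop) :
  (forall p d d', 0 < d' <= d -> Q p d -> Q p d') ->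
  (forall p, exists2 d, 0 < d & Q p d) ->
  exists2 r, 0 < r & forall p, Q p r.
Proof.
move=> mono ex.
suff : forall l : seq T, exists2 r, 0 < r & forall p, p \in l -> Q p r.
  by case/(_ (enum T)) => r r0 H; exists r => // p; apply: H; rewrite mem_enum.
elim=> [|a l [r r0 IH]]; first by exists 1.
case: (ex a) => d d0 Qd.
exists (Order.min r d); first by rewrite lt_min r0 d0.
move=> p; rewrite inE => /orP [/eqP -> | pl].
  by apply: (mono _ d) => //; rewrite lt_min r0 d0 /= ge_min lexx orbT.
apply: (mono p r); last exact: IH.
by rewrite lt_min r0 d0 /= ge_min lexx.
Qed.

Theorem mainTheorem15 (R : realType) (n : nat) (f : 'I_n -> linfn R) :
  exists2 r : R, 0 < r &
    forall (eps : R), `|eps| < r ->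
    forall (sigma rho : 'S_n),
      (forall x : R, lf_comp_perm (fun i => lf_pert eps (f i)) sigma x
                     <= lf_comp_perm (fun i => lf_pert eps (f i)) rho x) ->
      (forall x : R, lf_comp_perm f sigma x <= lf_comp_perm f rho x).
Proof.
pose B (s : 'S_n) (e : R) := lf_comp_perm (fun i => lf_pert e (f i)) s 0.
have B0 s : B s 0 = lf_comp_perm f s 0.
  rewrite /B; congr lf_comp_perm; apply: funext => i.
  by rewrite /lf_pert; case: (f i) => a b /=; case: ifP => //; rewrite addr0.
have cB s : cont0 R (B s).
  exact: (@fold_cont' R _ (fun i => f (s i)) (enum 'I_n) (fun _ => 0) (cvg_cst _)).
pose Q (p : 'S_n * 'S_n) (d : R) :=
  B p.2 0 < B p.1 0 -> forall e, `|e| < d -> B p.2 e < B p.1 e.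
have [r r0 Hr] : exists2 r, 0 < r & forall p, Q p r.
  apply: fin_min.
    move=> p d d' /andP[_ dd] Qd H e ed; apply: Qd => //; exact: lt_le_trans ed dd.
  move=> [s t]; rewrite /Q /=.
  have [lt|] := ltP (B t 0) (B s 0); last first.
    by move=> le; exists 1 => // /(le_lt_trans le); rewrite ltxx.
  have cD : ((fun e => B s e - B t e) e @[e --> (0:R)] --> B s 0 - B t 0)%classic.
    by apply: cvgB; [exact: cB | exact: cB].
  move/cvgrPdist_lt: cD => /(_ (B s 0 - B t 0)); rewrite subr_gt0 => /(_ lt).
  case/nbhs_ballP => d d0 Hd; exists d => // _ e ed.
  have := Hd e; rewrite -ball_normE /ball_ /= sub0r normrN => /(_ ed).
  move=> H; rewrite -subr_gt0.
  have := ler_norm (B s 0 - B t 0 - (B s e - B t e)).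
  move=> H2; have := le_lt_trans H2 H; set X := (B s 0 - B t 0); set Y := (B s e - B t e).
  by rewrite ltrBlDl ltrDr.
exists r => // e er s t Hle x.
rewrite comp_aff [X in _ <= X]comp_aff lerD2l -!B0.
rewrite leNgt; apply/negP => lt.
have := Hr (s, t) lt e er => /=.
by rewrite ltNge Hle.
Qed.
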